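(* Let $T:\mathcal{X}\to\mathcal{X}$, $\mathcal{X}\subseteq\mathbb{R}^n$, and data points $x_1,\dots,x_N$ with $x_i^+=T(x_i)$. Let $\Psi=[\psi_1,\dots,\psi_s]$ be a dictionary of real-valued observables spanning $\mathcal{S}$, and let $A=\Psi(X)\in\mathbb{R}^{N\times s}$ and $B=\Psi(X^+)\in\mathbb{R}^{N\times s}$ (rows $\Psi(x_i)$, $\Psi(x_i^+)$) have full column rank. Define the forward and backward EDMD matrices $K_f=A^\dagger B$, $K_b=B^\dagger A$ and the consistency matrix $M_c=I-K_fK_b\in\mathbb{R}^{s\times s}$. Let $\theta_1,\dots,\theta_s$ be the principal angles between $\mathcal{R}(A)$ and $\mathcal{R}(B)$ in $\mathbb{R}^N$ (equivalently, between $\mathcal{S}$ and $\mathcal{K}\mathcal{S}=\mathrm{span}\{\psi_j\circ T\}$ with the empirical inner product $\langle f,g\rangle=\frac1N\sum_i f(x_i)g(x_i)$). Then: (1) the eigenvalues $\lambda_1,\dots,\lambda_s$ of $M_c$ (with multiplicity) are $\lambda_i=\sin^2\theta_i$, $i=1,\dots,s$; (2) $M_c$ has eigenvectors $v_1,\dots,v_s$ with $M_cv_i=\sin^2\theta_i\,v_i$ such that $Av_i$ is the $i$-th principal vector of $\mathcal{R}(A)$ (with respect to $\mathcal{R}(B)$); correspondingly the function $u_i^{\mathcal{S}}(\cdot)=\Psi(\cdot)v_i$ is the $i$-th principal vector of $\mathcal{S}$ with respect to $\mathcal{K}\mathcal{S}$, for all $i=1,\dots,s$.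
   Context: $M^\dagger$ denotes the Moore–Penrose pseudoinverse and $\mathcal{R}(M)$ the column space. Principal angles and vectors: for subspaces $\mathcal{U},\mathcal{V}$ of an inner product space with $\dim\mathcal{U}=d_1$, $\dim\mathcal{V}=d_2$, $k=\min\{d_1,d_2\}$, the principal angles $0\le\theta_1\le\dots\le\theta_k\le\pi/2$ are defined recursively by $\cos\theta_j=\max|\langle u,v\rangle|$ over unit $u\in\mathcal{U}$, $v\in\mathcal{V}$ orthogonal to the previously chosen $u_1,\dots,u_{j-1}$ and $v_1,\dots,v_{j-1}$ respectively; the maximizers $(u_j,v_j)$ are the $j$-th pair of principal vectors. Observables are identified with their value vectors on the data points $x_1,\dots,x_N$ (unit normalization understood up to the constant factor from the empirical measure). *)

(* Defs.v *)
From HB Require Import structures.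
From mathcomp Require Import all_boot all_order all_algebra.
From mathcomp Require Import all_classical all_reals all_analysis.
Set Implicit Arguments. Unset Strict Implicit. Unset Printing Implicit Defensive.
Import Order.TTheory GRing.Theory Num.Theory.
Local Open Scope ring_scope.

Definition dotv (R : realType) (N : nat) (x y : 'cV[R]_N) : R := (x^T *m y) 0 0.

Definition in_colspace (R : realType) (N d : nat) (M : 'M[R]_(N, d)) (x : 'cV[R]_N) :=
  exists c : 'cV[R]_d, x = M *m c.

Definition is_MP_pinv (R : realType) (m n : nat) (M : 'M[R]_(m, n)) (X : 'M[R]_(n, m)) :=
  [/\ M *m X *m M = M, X *m M *m X = X,
      (M *m X)^T = M *m X & (X *m M)^T = X *m M].

(* (u j, w j), j < k, are the successive pairs of principal vectors of
   U = R(A) and V = R(B) (recursive definition: unit vectors, orthogonal to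
   the previously chosen ones, maximizing |<u,w>| among all such). *)
Definition principal_vectors (R : realType) (N d1 d2 k : nat)
    (A : 'M[R]_(N, d1)) (B : 'M[R]_(N, d2)) (u w : 'I_k -> 'cV[R]_N) : Prop :=
  forall j : 'I_k,
    [/\ in_colspace A (u j) /\ in_colspace B (w j),
        dotv (u j) (u j) = 1, dotv (w j) (w j) = 1,
        (forall i : 'I_k, (i < j)%N -> dotv (u i) (u j) = 0 /\ dotv (w i) (w j) = 0) &
        (forall x y : 'cV[R]_N,
            in_colspace A x -> in_colspace B y ->
            dotv x x = 1 -> dotv y y = 1 ->
            (forall i : 'I_k, (i < j)%N -> dotv (u i) x = 0 /\ dotv (w i) y = 0) ->
            `|dotv x y| <= `|dotv (u j) (w j)|)].

Definition principal_angle (R : realType) (N k : nat) (u w : 'I_k -> 'cV[R]_N) (j : 'I_k) : R :=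
  acos `|dotv (u j) (w j)|.

Definition data_matrix (R : realType) (n N s : nat)
    (psi : 'I_s -> 'rV[R]_n -> R) (x : 'I_N -> 'rV[R]_n) : 'M[R]_(N, s) :=
  \matrix_(i < N, j < s) psi j (x i).

(* Main.v *)
Require Import Defs.
From HB Require Import structures.
From mathcomp Require Import all_boot all_order all_algebra.
From mathcomp Require Import all_classical all_reals all_analysis.
Import Order.TTheory GRing.Theory Num.Theory.
Local Open Scope ring_scope.

Section Dot.
Context {R : realType}.

Lemma dotvE {N} (x y : 'cV[R]_N) : dotv x y = \sum_k x k 0 * y k 0.
Proof. by rewrite /dotv mxE; apply: eq_bigr => k _; rewrite mxE. Qed.

Lemma dotvC {N} (x y : 'cV[R]_N) : dotv x y = dotv y x.
Proof. by rewrite !dotvE; apply: eq_bigr => k _; exact: mulrC. Qed.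

Lemma dotvDl {N} (x y z : 'cV[R]_N) : dotv (x + y) z = dotv x z + dotv y z.
Proof. by rewrite !dotvE -big_split; apply: eq_bigr => k _; rewrite mxE mulrDl. Qed.

Lemma dotvZl {N} a (x y : 'cV[R]_N) : dotv (a *: x) y = a * dotv x y.
Proof. by rewrite !dotvE mulr_sumr; apply: eq_bigr => k _; rewrite mxE mulrA. Qed.

Lemma dotvNl {N} (x y : 'cV[R]_N) : dotv (- x) y = - dotv x y.
Proof. by rewrite -scaleN1r dotvZl mulN1r. Qed.

Lemma dotvBl {N} (x y z : 'cV[R]_N) : dotv (x - y) z = dotv x z - dotv y z.
Proof. by rewrite dotvDl dotvNl. Qed.

Lemma dotvDr {N} (x y z : 'cV[R]_N) : dotv z (x + y) = dotv z x + dotv z y.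
Proof. by rewrite dotvC dotvDl !(dotvC z). Qed.

Lemma dotvZr {N} a (x y : 'cV[R]_N) : dotv y (a *: x) = a * dotv y x.
Proof. by rewrite dotvC dotvZl dotvC. Qed.

Lemma dotvBr {N} (x y z : 'cV[R]_N) : dotv z (x - y) = dotv z x - dotv z y.
Proof. by rewrite dotvC dotvBl !(dotvC z). Qed.

Lemma dotv_mull {N} (M : 'M[R]_N) (x y : 'cV[R]_N) :
  dotv (M *m x) y = dotv x (M^T *m y).
Proof. by rewrite /dotv trmx_mul mulmxA. Qed.

Lemma dotv_ge0 {N} (x : 'cV[R]_N) : 0 <= dotv x x.
Proof. by rewrite dotvE; apply: sumr_ge0 => k _; rewrite -expr2 sqr_ge0. Qed.

Lemma dotv_eq0 {N} (x : 'cV[R]_N) : dotv x x = 0 -> x = 0.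
Proof.
rewrite dotvE => /psumr_eq0P H; apply/matrixP => k l.
have {}H := H (fun i _ => ltac:(by rewrite -expr2 sqr_ge0)).
rewrite (ord1 l) mxE; have := H k isT.
by move/eqP; rewrite mulf_eq0 orbb => /eqP.
Qed.

End Dot.

Section Side.
Context {R : realType}.

Lemma side {N} (Q : 'M[R]_N) (a0 z : 'cV[R]_N) :
  Q^T = Q -> Q *m Q = Q -> Q *m z = z -> dotv z z = 1 ->
  (0 < dotv (Q *m a0) (Q *m a0) ->
     `|dotv a0 ((Num.sqrt (dotv (Q *m a0) (Q *m a0)))^-1 *: (Q *m a0))| <= `|dotv a0 z|) ->
  Q *m a0 = dotv a0 z *: z.
Proof.
move=> QT QQ Qz zz hmax.
set p := Q *m a0; set c := dotv a0 z.
have ha : dotv p p = dotv a0 p by rewrite /p dotv_mull QT mulmxA QQ.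
have hc : c = dotv p z by rewrite /p dotv_mull QT Qz.
have hle : dotv p p <= c ^+ 2.
  have [pos|] := ltP 0 (dotv p p); last first.
    by move=> h; apply: le_trans h (sqr_ge0 _).
  have := hmax pos; rewrite -/p dotvZr -ha.
  have sa : Num.sqrt (dotv p p) != 0 by rewrite sqrtr_eq0 -ltNge.
  rewrite -{2}(sqr_sqrtr (ltW pos)) expr2 mulKf // => H.
  rewrite -(sqr_sqrtr (ltW pos)) -real_normK ?num_real //.
  rewrite -[c ^+ 2]real_normK ?num_real // !expr2.
  by apply: ler_pM; rewrite ?normr_ge0.
apply/eqP; rewrite -subr_eq0; apply/eqP; apply: dotv_eq0.
apply/le_anti; rewrite dotv_ge0 andbT.
rewrite !(dotvBl, dotvBr, dotvZl, dotvZr) zz -hc (dotvC z p) -hc.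
by rewrite mulr1 subrr mulr0 subr0 subr_le0 -expr2.
Qed.

Lemma cs_le1 {N} (x y : 'cV[R]_N) : dotv x x = 1 -> dotv y y = 1 ->
  `|dotv x y| <= 1.
Proof.
move=> xx yy; set c := dotv x y.
have : 0 <= dotv (x - c *: y) (x - c *: y) by apply: dotv_ge0.
rewrite !(dotvBl, dotvBr, dotvZl, dotvZr) xx yy (dotvC y x) -/c.
rewrite mulr1 subrr mulr0 subr0 subr_ge0 => h.
by rewrite -(@expr_le1 _ 2 `|c|) // ?normr_ge0 // real_normK ?num_real // expr2.
Qed.

End Side.

Section Sing.
Context {R : realType}.

Lemma dotv_sym {N} (M : 'M[R]_N) (x y : 'cV[R]_N) : M^T = M ->
  dotv x (M *m y) = dotv (M *m x) y.
Proof. by move=> MT; rewrite dotv_mull MT. Qed.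

Lemma dotv_normalize {N} (p : 'cV[R]_N) : 0 < dotv p p ->
  dotv ((Num.sqrt (dotv p p))^-1 *: p) ((Num.sqrt (dotv p p))^-1 *: p) = 1.
Proof.
move=> pos; rewrite dotvZl dotvZr mulrA -expr2 exprVn sqr_sqrtr ?ltW //.
by rewrite mulVf // gt_eqF.
Qed.

Lemma pv_singular {N d1 d2 k} (A : 'M[R]_(N,d1)) (B : 'M[R]_(N,d2)) (P Q : 'M[R]_N)
    (u w : 'I_k -> 'cV[R]_N) :
  (forall x, in_colspace A x <-> P *m x = x) -> P^T = P -> P *m P = P ->
  (forall x, in_colspace B x <-> Q *m x = x) -> Q^T = Q -> Q *m Q = Q ->
  principal_vectors A B u w ->
  forall j, Q *m u j = dotv (u j) (w j) *: w j /\ P *m w j = dotv (u j) (w j) *: u j.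
Proof.
move=> hA PT PP hB QT QQ hpv.
suff H : forall m (j : 'I_k), (j < m)%N ->
    Q *m u j = dotv (u j) (w j) *: w j /\ P *m w j = dotv (u j) (w j) *: u j.
  by move=> j; apply: (H j.+1).
elim=> [//|m IH] j; rewrite ltnS => hj.
have IHj (i : 'I_k) : (i < j)%N -> Q *m u i = dotv (u i) (w i) *: w i /\
     P *m w i = dotv (u i) (w i) *: u i.
  by move=> hi; apply: IH; exact: leq_trans hi hj.
have PuA (i : 'I_k) : P *m u i = u i by case: (hpv i) => [[/hA ? _] _ _ _ _].
have QwB (i : 'I_k) : Q *m w i = w i by case: (hpv i) => [[_ /hB ?] _ _ _ _].
case: (hpv j) => [[cuA cwB] uu ww orth mx].
split.
- apply: side => // pos.
  set sq := Num.sqrt _; apply: mx => //.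
  + by apply/hB; rewrite -scalemxAr mulmxA QQ.
  + exact: (dotv_normalize _ pos).
  + move=> i hi; split; first by case: (orth i hi).
    rewrite dotvZr (dotv_sym Q (w i)) // QwB -(PuA j) (dotv_sym P (w i)) // (IHj i hi).2 dotvZl.
    by rewrite dotvC (orth i hi).1 mulr0 mulr0.
- rewrite (dotvC (u j)); apply: side => // pos.
  rewrite dotvC [dotv (w j) (u j)]dotvC.
  set sq := Num.sqrt _; apply: mx => //.
  + by apply/hA; rewrite -scalemxAr mulmxA PP.
  + exact: (dotv_normalize _ pos).
  + move=> i hi; split; last by case: (orth i hi).
    rewrite dotvZr (dotv_sym P (u i)) // PuA -(QwB j) (dotv_sym Q (u i)) // (IHj i hi).1 dotvZl.
    by rewrite (orth i hi).2 mulr0 mulr0.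
Qed.

End Sing.

Section MP.
Context {R : realType}.

Lemma mp_facts {N s} (A : 'M[R]_(N,s)) (Ad : 'M[R]_(s, N)) :
  is_MP_pinv A Ad -> \rank A = s ->
  [/\ (forall x, in_colspace A x <-> (A *m Ad) *m x = x), (A *m Ad)^T = A *m Ad,
      (A *m Ad) *m (A *m Ad) = A *m Ad, Ad *m (A *m Ad) = Ad & Ad *m A = 1%:M].
Proof.
case=> h1 h2 h3 h4 rk; split => //.
- move=> x; split.
    by case=> c ->; rewrite !mulmxA h1.
  by move=> hx; exists (Ad *m x); rewrite mulmxA.
- by rewrite !mulmxA h1.
- by rewrite !mulmxA h2.
have rf : row_free A^T by rewrite /row_free mxrank_tr rk.
apply: trmx_inj; apply: (row_free_inj rf).
by rewrite /= -trmx_mul mulmxA h1 trmx1 mul1mx.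
Qed.

End MP.

Section Part1.
Context {R : realType}.

Lemma char_poly_sim {n} (M D V : 'M[R]_n) : V \in unitmx ->
  M *m V = V *m D -> char_poly M = char_poly D.
Proof.
move=> Vu MV.
have e : char_poly_mx M *m map_mx polyC V = map_mx polyC V *m char_poly_mx D.
  rewrite /char_poly_mx mulmxBl mulmxBr -!map_mxM MV; congr (_ - _).
  by rewrite scalar_mxC.
have := congr1 determinant e; rewrite !det_mulmx det_map_mx /= [RHS]mulrC.
move/mulIf; apply; rewrite polyC_eq0 -unitfE -unitmxE //.
Qed.

Lemma mul_colmx {N s m} (M : 'M[R]_(m, N)) (u : 'I_s -> 'cV[R]_N) :
  M *m (\matrix_(k, i) u i k 0) = \matrix_(k, i) (M *m u i) k 0.
Proof.
by apply/matrixP => k i; rewrite !mxE; apply: eq_bigr => l _; rewrite !mxE.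
Qed.

Lemma sin_acos_sqr (c : R) : `|c| <= 1 -> sin (acos `|c|) ^+ 2 = 1 - c ^+ 2.
Proof.
move=> h; rewrite sin2cos2 acosK ?real_normK ?num_real //.
rewrite in_itv /= h andbT; apply: le_trans (normr_ge0 _); by rewrite lerN10.
Qed.

Lemma part1 {N s} (A B : 'M[R]_(N, s)) (Ad Bd : 'M[R]_(s, N)) (u w : 'I_s -> 'cV[R]_N) :
  is_MP_pinv A Ad -> is_MP_pinv B Bd -> \rank A = s -> \rank B = s ->
  principal_vectors A B u w ->
  char_poly (1%:M - Ad *m B *m (Bd *m A)) =
    \prod_(i < s) ('X - (sin (principal_angle u w i) ^+ 2)%:P).
Proof.
move=> mpA mpB rA rB hpv.
have [hA PT PP AdP AdA] := mp_facts _ _ mpA rA.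
have [hB QT QQ BdQ BdB] := mp_facts _ _ mpB rB.
have sing := pv_singular _ _ _ _ _ _ hA PT PP hB QT QQ hpv.
set P := A *m Ad in hA PT PP AdP sing.
set Q := B *m Bd in hB QT QQ BdQ sing.
pose c i := dotv (u i) (w i).
pose U := \matrix_(k, i) u i k 0 : 'M[R]_(N, s).
pose W := \matrix_(k, i) w i k 0 : 'M[R]_(N, s).
pose V := Ad *m U.
pose d := \row_i c i.
have PuA i : P *m u i = u i by case: (hpv i) => [[/hA ? _] _ _ _ _].
have AV : A *m V = U.
  rewrite /V mulmxA -/P /U mul_colmx; apply/matrixP => k i.
  by rewrite [LHS]mxE PuA mxE.
have UU : U^T *m U = 1%:M.
  apply/matrixP => i j; rewrite !mxE.
  have -> : \sum_j0 U^T i j0 * U j0 j = dotv (u i) (u j).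
    by rewrite dotvE; apply: eq_bigr => k _; rewrite !mxE.
  case: (ltngtP i j) => hij.
  - rewrite (_ : (i == j) = false); last by apply/eqP => e; rewrite e ltnn in hij.
    by case: (hpv j) => [_ _ _ /(_ i hij) [-> _] _].
  - rewrite (_ : (i == j) = false); last by apply/eqP => e; rewrite e ltnn in hij.
    by rewrite dotvC; case: (hpv i) => [_ _ _ /(_ j hij) [-> _] _].
  - have -> : i = j by apply: val_inj.
    by rewrite eqxx; case: (hpv j).
have Vu : V \in unitmx.
  have : (U^T *m A) *m V = 1%:M by rewrite -mulmxA AV UU.
  by case/mulmx1_unit.
have QU : Q *m U = W *m diag_mx d.
  rewrite /U mul_colmx mul_mx_diag; apply/matrixP => k i.
  by rewrite [LHS]mxE (sing i).1 !mxE mulrC.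
have PW : P *m W = U *m diag_mx d.
  rewrite /W mul_colmx mul_mx_diag; apply/matrixP => k i.
  by rewrite [LHS]mxE (sing i).2 !mxE mulrC.
have MV : (1%:M - Ad *m B *m (Bd *m A)) *m V = V *m diag_mx (\row_i (1 - c i ^+ 2)).
  have e1 : Ad *m B *m (Bd *m A) *m V = V *m diag_mx d *m diag_mx d.
    rewrite -!mulmxA AV [B *m _]mulmxA -/Q QU mulmxA -{1}AdP -(mulmxA Ad P W) PW.
    by rewrite /V !mulmxA.
  rewrite mulmxBl mul1mx e1; apply/matrixP => k i.
  rewrite !mul_mx_diag !mxE mulrBr mulr1 -mulrA -expr2.
  by [].
rewrite (char_poly_sim _ _ _ Vu MV) char_poly_trig ?diag_mx_is_trig //.
apply: eq_bigr => i _; rewrite !mxE eqxx mulr1n.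
rewrite /principal_angle sin_acos_sqr //.
by case: (hpv i) => [_ uu ww _ _]; apply: cs_le1.
Qed.

End Part1.

Section Cont.
Local Open Scope classical_set_scope.
Import numFieldNormedType.Exports.
Context {R : realType}.

Lemma cont_sum {n m} (F : 'I_m -> 'rV[R]_n -> R) :
  (forall k, continuous (F k)) -> continuous (fun z => \sum_(k < m) F k z).
Proof.
elim: m F => [|m IH] F hF.
  under eq_fun do rewrite big_ord0.
  exact: cst_continuous.
under eq_fun do rewrite big_ord_recr /=.
move=> z; apply: continuousD; last exact: hF.
exact: (IH (fun k => F (widen_ord (leqnSn m) k))).
Qed.

Definition cvec {n N} (g : 'rV[R]_n -> 'cV[R]_N) :=
  forall k, continuous (fun z => g z k 0).

Lemma cont_dot {n N} (g h : 'rV[R]_n -> 'cV[R]_N) : cvec g -> cvec h ->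
  continuous (fun z => dotv (g z) (h z)).
Proof.
move=> cg ch; under eq_fun do rewrite dotvE.
apply: cont_sum => k z; apply: continuousM; [exact: cg | exact: ch].
Qed.

Lemma cvec_mul {n N M} (P : 'M[R]_(M, N)) (g : 'rV[R]_n -> 'cV[R]_N) : cvec g ->
  cvec (fun z => P *m g z).
Proof.
move=> cg k; under eq_fun do rewrite mxE.
apply: cont_sum => l z; apply: continuousM; [exact: cst_continuous | exact: cg].
Qed.

Lemma cvec_sub {n N} (g h : 'rV[R]_n -> 'cV[R]_N) : cvec g -> cvec h ->
  cvec (fun z => g z - h z).
Proof.
move=> cg ch k; under eq_fun do rewrite !mxE.
move=> z; apply: continuousB; [exact: cg | exact: ch].
Qed.

Lemma cvec_cst {n N} (c : 'cV[R]_N) : cvec (fun _ : 'rV[R]_n => c).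
Proof. by move=> k; exact: cst_continuous. Qed.

Lemma cvec_l {N} : cvec (fun z : 'rV[R]_(N + N) => (lsubmx z)^T).
Proof.
move=> k; under eq_fun do rewrite !mxE.
exact: coord_continuous.
Qed.

Lemma cvec_r {N} : cvec (fun z : 'rV[R]_(N + N) => (rsubmx z)^T).
Proof.
move=> k; under eq_fun do rewrite !mxE.
exact: coord_continuous.
Qed.

End Cont.

Section Nonempty.
Context {R : realType}.

Lemma exists_orth {N s} (A : 'M[R]_(N,s)) (Ad : 'M[R]_(s,N)) (u : nat -> 'cV[R]_N) j :
  Ad *m A = 1%:M -> (j < s)%N ->
  exists x, [/\ in_colspace A x, dotv x x = 1 & forall i, (i < j)%N -> dotv (u i) x = 0].
Proof.
move=> AdA js.
pose Uj : 'M[R]_(N, j) := \matrix_(k, i) u i k 0.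
pose M := A^T *m Uj.
have kz : kermx M != 0.
  rewrite kermx_eq0 /row_free; apply/negP => /eqP e.
  have := rank_leq_col M; rewrite e => h.
  by move: (leq_ltn_trans h js); rewrite ltnn.
have [l hl] : exists l, row l (kermx M) != 0.
  case: (pickP (fun l => row l (kermx M) != 0)) => [l hl | h]; first by exists l.
  move: kz => /eqP []; apply/row_matrixP => l.
  by move/negbFE: (h l) => /eqP ->; rewrite row0.
set r := row l (kermx M) in hl.
have rM : r *m M = 0 by rewrite /r -row_mul mulmx_ker row0.
pose x0 := A *m r^T.
have x0nz : x0 != 0.
  apply/eqP => e; move/eqP: hl; apply.
  by rewrite -[r]trmxK -[r^T]mul1mx -AdA -mulmxA -/x0 e mulmx0 trmx0.
have pos : 0 < dotv x0 x0.
  rewrite lt_def dotv_ge0 andbT; apply/eqP => e; move/eqP: x0nz; apply.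
  exact: dotv_eq0.
exists ((Num.sqrt (dotv x0 x0))^-1 *: x0); split.
- by exists ((Num.sqrt (dotv x0 x0))^-1 *: r^T); rewrite scalemxAr.
- exact: dotv_normalize.
move=> i hi; rewrite dotvZr.
suff -> : dotv (u i) x0 = 0 by rewrite mulr0.
have := congr1 (fun m : 'M[R]_(1, j) => m 0 (Ordinal hi)) rM.
rewrite /= mxE [RHS]mxE => <-.
rewrite dotvC /dotv /x0 trmx_mul trmxK /M -mulmxA [LHS]mxE.
apply: eq_bigr => k _; congr (_ * _); rewrite !mxE.
by apply: eq_bigr => k' _; rewrite !mxE.
Qed.

End Nonempty.

Section Max.
Local Open Scope classical_set_scope.
Import numFieldNormedType.Exports.
Context {R : realType}.

Definition adm {N d1 d2} (A : 'M[R]_(N,d1)) (B : 'M[R]_(N,d2)) (u w : nat -> 'cV[R]_N)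
  (j : nat) (x y : 'cV[R]_N) :=
  [/\ in_colspace A x, in_colspace B y, dotv x x = 1, dotv y y = 1 &
      forall i, (i < j)%N -> dotv (u i) x = 0 /\ dotv (w i) y = 0].

Lemma colsp_dot {N d} (A : 'M[R]_(N,d)) (P : 'M[R]_N) (x : 'cV[R]_N) :
  (forall x, in_colspace A x <-> P *m x = x) ->
  (in_colspace A x <-> dotv (P *m x - x) (P *m x - x) = 0).
Proof.
move=> hA; rewrite hA; split.
  by move=> ->; rewrite subrr dotvE big1 // => k _; rewrite mxE mul0r.
by move/dotv_eq0/eqP; rewrite subr_eq0 => /eqP.
Qed.

Lemma coord_le1 {N} (x : 'cV[R]_N) k : dotv x x = 1 -> `|x k 0| <= 1.
Proof.
move=> h.
have : x k 0 ^+ 2 <= 1.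
  rewrite -h dotvE (bigD1 k) //= expr2 lerDl.
  by apply: sumr_ge0 => i _; rewrite -expr2 sqr_ge0.
rewrite -real_normK ?num_real // => h2.
by rewrite -(@expr_le1 _ 2 `|x k 0|) ?normr_ge0.
Qed.

Lemma closed_level {n} (phi : 'rV[R]_n -> R) (c : R) : continuous phi ->
  closed [set z | phi z = c].
Proof.
move=> hphi; apply: (@preimage_closed _ _ phi [set x | x = c]).
  by move=> z _; apply: hphi.
exact: closed_eq.
Qed.

Lemma exists_max {N s} (A B : 'M[R]_(N, s)) (Ad Bd : 'M[R]_(s, N))
    (u w : nat -> 'cV[R]_N) j :
  is_MP_pinv A Ad -> is_MP_pinv B Bd -> \rank A = s -> \rank B = s -> (j < s)%N ->
  exists x y, adm A B u w j x y /\
    forall x' y', adm A B u w j x' y' -> `|dotv x' y'| <= `|dotv x y|.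
Proof.
move=> mpA mpB rA rB js.
have [hA PT PP AdP AdA] := mp_facts _ _ mpA rA.
have [hB QT QQ BdQ BdB] := mp_facts _ _ mpB rB.
set P := A *m Ad in hA PT PP AdP.
set Q := B *m Bd in hB QT QQ BdQ.
pose xz (z : 'rV[R]_(N + N)) := (lsubmx z)^T.
pose yz (z : 'rV[R]_(N + N)) := (rsubmx z)^T.
pose K := [set z | adm A B u w j (xz z) (yz z)].
have Keq : K = [set z | dotv (P *m xz z - xz z) (P *m xz z - xz z) = 0] `&`
               [set z | dotv (Q *m yz z - yz z) (Q *m yz z - yz z) = 0] `&`
               [set z | dotv (xz z) (xz z) = 1] `&` [set z | dotv (yz z) (yz z) = 1] `&`
               \bigcap_(i in [set i | (i < j)%N])
                 ([set z | dotv (u i) (xz z) = 0] `&` [set z | dotv (w i) (yz z) = 0]).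
  apply/seteqP; split => z /=.
    case=> /(colsp_dot _ _ _ hA) ? /(colsp_dot _ _ _ hB) ? ? ? hi.
    by do !split => //; move=> i /= /hi [].
  case=> [[[[/(colsp_dot _ _ _ hA) ? /(colsp_dot _ _ _ hB) ?] ?] ?] hi]; split => //.
have cx : cvec xz by exact: cvec_l.
have cy : cvec yz by exact: cvec_r.
have Kcl : closed K.
  rewrite Keq; apply: closedI; [apply: closedI; [apply: closedI; [apply: closedI|]|]|].
  - by apply: closed_level; apply: cont_dot; apply: cvec_sub => //; apply: cvec_mul.
  - by apply: closed_level; apply: cont_dot; apply: cvec_sub => //; apply: cvec_mul.
  - by apply: closed_level; apply: cont_dot.
  - by apply: closed_level; apply: cont_dot.
  apply: closed_bigI => i _; apply: closedI.
  - by apply: closed_level; apply: cont_dot => //; apply: cvec_cst.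
  - by apply: closed_level; apply: cont_dot => //; apply: cvec_cst.
have Kb1 z : K z -> `|z| <= 1.
  case=> _ _ xx yy _.
  rewrite [leLHS]/Num.norm /= mx_normrE; apply: bigmax_le => // [[i l]] _ /=.
  rewrite (ord1 i); case: (splitP l) => k hk.
  - have -> : l = lshift N k by apply: val_inj.
    have := coord_le1 _ k xx; by rewrite /xz !mxE.
  - have -> : l = rshift N k by apply: val_inj.
    have := coord_le1 _ k yy; by rewrite /yz !mxE.
have Kbd : bounded_set K.
  rewrite /bounded_set /= /bounded_near; near=> M; move=> z /= Kz.
  apply: le_trans (Kb1 z Kz) _; near: M.
  by apply: nbhs_pinfty_ge; rewrite num_real.
have Kne : K !=set0.
  have [x0 [x0A x0x x0o]] := exists_orth _ _ u _ AdA js.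
  have [y0 [y0B y0y y0o]] := exists_orth _ _ w _ BdB js.
  exists (row_mx x0^T y0^T); rewrite /K /= /xz /yz row_mxKl row_mxKr !trmxK.
  by split => // i hi; split; [apply: x0o | apply: y0o].
pose f z := `|dotv (xz z) (yz z)|.
have fc : continuous f.
  move=> z; apply: (continuous_comp (f := fun z => dotv (xz z) (yz z))).
    exact: cont_dot.
  exact: norm_continuous.
have [c cK cmax] := compact_EVT_max Kne (bounded_closed_compact Kbd Kcl)
  (continuous_subspaceT fc).
exists (xz c), (yz c); split; first by move: cK; rewrite inE.
move=> x' y' hxy.
have Kz : K (row_mx x'^T y'^T) by rewrite /K /= /xz /yz row_mxKl row_mxKr !trmxK.
have := cmax _ (mem_set Kz).
by rewrite /f /xz /yz row_mxKl row_mxKr !trmxK.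
Unshelve. all: by end_near.
Qed.

End Max.

Section Part2.
Context {R : realType}.

Lemma adm_ext {N d1 d2} (A : 'M[R]_(N,d1)) (B : 'M[R]_(N,d2)) (u w u' w' : nat -> 'cV[R]_N) j x y :
  (forall i, (i < j)%N -> u' i = u i /\ w' i = w i) ->
  adm A B u' w' j x y <-> adm A B u w j x y.
Proof.
move=> H; split; case=> a b c d e; split => // i hi; have [E1 E2] := H i hi.
- by rewrite -E1 -E2; apply: e.
- by rewrite E1 E2; apply: e.
Qed.

Lemma build {N s} (A B : 'M[R]_(N, s)) (Ad Bd : 'M[R]_(s, N)) :
  is_MP_pinv A Ad -> is_MP_pinv B Bd -> \rank A = s -> \rank B = s ->
  forall m, (m <= s)%N -> exists u w : nat -> 'cV[R]_N, forall j, (j < m)%N ->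
    adm A B u w j (u j) (w j) /\
    (forall x y, adm A B u w j x y -> `|dotv x y| <= `|dotv (u j) (w j)|).
Proof.
move=> mpA mpB rA rB; elim=> [_|m IH hm].
  by exists (fun _ => 0), (fun _ => 0).
have [u [w H]] := IH (ltnW hm).
have [x [y [hxy hmax]]] := exists_max _ _ _ _ u w m mpA mpB rA rB hm.
exists (fun i => if i == m then x else u i), (fun i => if i == m then y else w i).
move=> j; rewrite ltnS => hj.
have ext : forall i, (i < j)%N -> (if i == m then x else u i) = u i /\
    (if i == m then y else w i) = w i.
  move=> i hi; have -> : (i == m) = false.
    by apply/negbTE; rewrite neq_ltn (leq_trans hi hj).
  by [].
rewrite !(adm_ext _ _ _ _ _ _ _ _ _ ext).
case: (ltngtP j m) hj => // [jm _|jm _]; last subst j.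
  split; first by case: (H j jm).
  by move=> x' y'; rewrite (adm_ext _ _ _ _ _ _ _ _ _ ext); case: (H j jm) => _; apply.
split => // x' y'.
by rewrite (adm_ext _ _ _ _ _ _ _ _ _ ext); apply: hmax.
Qed.

End Part2.

Section Part2b.
Context {R : realType}.

Lemma part2 {N s} (A B : 'M[R]_(N, s)) (Ad Bd : 'M[R]_(s, N)) :
  is_MP_pinv A Ad -> is_MP_pinv B Bd -> \rank A = s -> \rank B = s ->
  exists (v : 'I_s -> 'cV[R]_s) (w : 'I_s -> 'cV[R]_N),
     principal_vectors A B (fun i => A *m v i) w /\
     forall i : 'I_s,
       (1%:M - Ad *m B *m (Bd *m A)) *m v i =
         sin (principal_angle (fun i => A *m v i) w i) ^+ 2 *: v i.
Proof.
move=> mpA mpB rA rB.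
have [u [w H]] := build _ _ _ _ mpA mpB rA rB s (leqnn s).
have [hA PT PP AdP AdA] := mp_facts _ _ mpA rA.
have [hB QT QQ BdQ BdB] := mp_facts _ _ mpB rB.
set P := A *m Ad in hA PT PP AdP.
set Q := B *m Bd in hB QT QQ BdQ.
exists (fun i : 'I_s => Ad *m u i), (fun i : 'I_s => w i).
have Au (i : 'I_s) : A *m (Ad *m u i) = u i.
  rewrite mulmxA -/P; apply/hA.
  by case: (H i (ltn_ord i)) => [[]].
have -> : (fun i : 'I_s => A *m (Ad *m u i)) = (fun i : 'I_s => u i).
  by apply: funext => i; exact: Au.
have pv : principal_vectors A B (fun i : 'I_s => u i) (fun i : 'I_s => w i).
  move=> j; have [[cA cB uu ww orth] mx] := H j (ltn_ord j); split => //.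
  - by move=> i hi; exact: orth.
  - move=> x y hx hy xx yy ho; apply: mx; split => // i hi.
    exact: (ho (Ordinal (ltn_trans hi (ltn_ord j))) hi).
split => // i.
have [s1 s2] := pv_singular _ _ _ _ _ _ hA PT PP hB QT QQ pv i.
rewrite /principal_angle sin_acos_sqr; last first.
  by case: (pv i) => [_ uu ww _ _]; apply: cs_le1.
rewrite mulmxBl mul1mx -!mulmxA Au [B *m (Bd *m _)]mulmxA -/Q s1 -scalemxAr.
rewrite -{2}AdP -mulmxA s2 -scalemxAr scalerA -expr2.
by rewrite scalerBl scale1r.
Qed.

End Part2b.


Theorem lemma1 (R : realType) (n N s : nat)
  (Xdom : 'rV[R]_n -> Prop) (T : 'rV[R]_n -> 'rV[R]_n)
  (hT : forall y, Xdom y -> Xdom (T y))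
  (x : 'I_N -> 'rV[R]_n) (hx : forall i, Xdom (x i))
  (psi : 'I_s -> 'rV[R]_n -> R)
  (Ad Bd : 'M[R]_(s, N)) :
  let A := data_matrix psi x in
  let B := data_matrix psi (fun i => T (x i)) in
  \rank A = s -> \rank B = s ->
  is_MP_pinv A Ad -> is_MP_pinv B Bd ->
  let Kf := Ad *m B in
  let Kb := Bd *m A in
  let Mc := 1%:M - Kf *m Kb in
  (* (1) the eigenvalues of Mc, with multiplicity, are sin^2 theta_i *)
  (forall u w : 'I_s -> 'cV[R]_N, principal_vectors A B u w ->
     char_poly Mc = \prod_(i < s) ('X - (sin (principal_angle u w i) ^+ 2)%:P))
  /\
  (* (2) eigenvectors v_i with A v_i the i-th principal vector of R(A) *)
  (exists (v : 'I_s -> 'cV[R]_s) (w : 'I_s -> 'cV[R]_N),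
     principal_vectors A B (fun i => A *m v i) w /\
     forall i : 'I_s,
       Mc *m v i = sin (principal_angle (fun i => A *m v i) w i) ^+ 2 *: v i).
Proof.
move=> A B rA rB mpA mpB Kf Kb Mc; split.
- by move=> u w hpv; exact: (part1 _ _ _ _ _ _ mpA mpB rA rB hpv).
- exact: (part2 _ _ _ _ mpA mpB rA rB).
Qed.
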